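(* Let $G_0$ be a finite nonabelian simple group, identified with its inner automorphism group in $\mathrm{Aut}(G_0)$. Suppose that $\mathrm{Reg}_H(H\cdot G_0,5)\ge 5$ for every maximal solvable subgroup $H$ of $\mathrm{Aut}(G_0)$. Then for every $G$ with $G_0\le G\le\mathrm{Aut}(G_0)$ and every solvable subgroup $S$ of $G$, we have $\mathrm{Reg}_S(G,5)\ge 5$.
   Context: For a finite group $G$ and subgroup $H$, $G$ acts by right multiplication on the set $\Omega_H$ of right cosets of $H$, with kernel $H_G=\bigcap_{g\in G}H^g$; $\mathrm{Reg}_H(G,k)$ is the number of regular (free) orbits of $G/H_G$ on $\Omega_H^k$ under the componentwise action $(\alpha_1,\dots,\alpha_k)g=(\alpha_1g,\dots,\alpha_kg)$. A maximal solvable subgroup is a solvable subgroup not properly contained in a solvable subgroup. $H\cdot G_0$ is the subgroup generated by $H$ and $G_0$. *)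

(* Defs.v *)
From mathcomp Require Import all_boot all_fingroup all_solvable.
Set Implicit Arguments. Unset Strict Implicit. Unset Printing Implicit Defensive.
Local Open Scope group_scope.

Definition Inn (gT : finGroupType) (G0 : {group gT}) : {group {perm gT}} :=
  (conj_aut G0 @* G0)%G.

Section Reg.
Variable T : finGroupType.

Definition tact k (t : {ffun 'I_k -> {set T}}) (g : T) : {ffun 'I_k -> {set T}} :=
  [ffun i => t i :* g].

Definition cosetTuples (H G : {set T}) k : {set {ffun 'I_k -> {set T}}} :=
  [set t : {ffun 'I_k -> {set T}} | [forall i : 'I_k, t i \in rcosets H G]].

Definition tstab (G : {set T}) k (t : {ffun 'I_k -> {set T}}) : {set T} :=
  [set g in G | tact t g == t].

Definition torbit (G : {set T}) k (t : {ffun 'I_k -> {set T}}) :=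
  [set tact t g | g in G].

(* Reg_H(G,k): number of G-orbits on Omega_H^k on which G/H_G acts regularly,
   i.e. whose point stabilisers in G equal the kernel H_G = gcore H G. *)
Definition Reg (H G : {set T}) k : nat :=
  #|[set torbit G t | t in cosetTuples H G k & tstab G t == gcore H G]|.
End Reg.

(* Main.v *)
Require Import Defs.
From mathcomp Require Import all_boot all_fingroup all_solvable.
Local Open Scope group_scope.
Set Implicit Arguments. Unset Strict Implicit. Unset Printing Implicit Defensive.

Section GT.
Variables (gT : finGroupType) (G0 : {group gT}).
Hypotheses (simG : simple G0) (nabG : ~~ abelian G0).

Lemma Z1 : 'Z(G0) = 1.
Proof.
case/simpleP: simG => _ /(_ _ (center_normal G0)) [//|ZG].
by have := center_abelian G0; rewrite ZG (negbTE nabG).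
Qed.

Definition innm := restrm (normG G0) (conj_aut G0).

Lemma injm_inn : 'injm innm.
Proof. by rewrite ker_restrm ker_conj_aut -Z1. Qed.

Lemma InnE : Inn G0 :=: innm @* G0.
Proof. by rewrite im_restrm. Qed.

Lemma Inn_simple : simple (Inn G0).
Proof.
have := sub_isog (subxx G0) injm_inn.
rewrite -InnE => /isog_simple <-; exact simG.
Qed.

Lemma G0_nsol : ~~ solvable G0.
Proof.
apply/negP => sG; have := simple_sol_prime sG simG.
by move/prime_cyclic/cyclic_abelian; apply/negP.
Qed.

Lemma Inn_nsol : ~~ solvable (Inn G0).
Proof. rewrite InnE injm_sol //; [exact: G0_nsol | exact: injm_inn]. Qed.

Lemma conj_aut_Aut a x : a \in Aut G0 -> x \in G0 ->
  conj_aut G0 x ^ a = conj_aut G0 (a x).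
Proof.
move=> Aa Gx; have Aai : a^-1 \in Aut G0 by rewrite groupV.
have Gax : a x \in G0 by apply: Aut_closed.
apply/permP => z; rewrite conjgE !permM.
case Gz: (z \in G0).
  have Gz' : a^-1 z \in G0 by apply: Aut_closed.
  rewrite conj_autE // conj_autE //.
  rewrite -(autmE Aa) morphJ //= autmE permKV.
  done.
have Ac y : conj_aut G0 y \in Aut G0 := Aut_aut _ _.
have nz : z \notin G0 by rewrite Gz.
by rewrite (out_Aut Aai nz) (out_Aut (Ac x) nz) (out_Aut Aa nz) (out_Aut (Ac (a x)) nz).
Qed.

Lemma Aut_norm_Inn : Aut G0 \subset 'N(Inn G0).
Proof.
apply/subsetP => a Aa; rewrite inE; apply/subsetP => _ /imsetP[c Ic ->].
move: Ic; rewrite /= InnE => /morphimP[x _ Gx ->].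
rewrite /innm /= conj_aut_Aut //.
have Gax : a x \in G0 by apply: Aut_closed.
exact: (mem_morphim innm Gax Gax).
Qed.

Lemma cent_Inn a : a \in Aut G0 -> a \in 'C(Inn G0) -> a = 1.
Proof.
move=> Aa Ca; apply/permP => z; rewrite perm1.
case Gz: (z \in G0); last by rewrite (out_Aut Aa) ?Gz.
have Gaz : a z \in G0 by apply: Aut_closed.
apply: (injmP injm_inn) => //=.
have Iz : conj_aut G0 z \in Inn G0 by rewrite InnE; exact: (mem_morphim innm Gz Gz).
change (conj_aut G0 (a z) = conj_aut G0 z); rewrite -conj_aut_Aut //.
have cz : commute a (conj_aut G0 z) := (centP Ca) _ Iz.
by rewrite /commute in cz; rewrite conjgE -cz mulKg.
Qed.

Lemma solv_norm_trivial (N : {group {perm gT}}) :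
  N \subset Aut G0 -> solvable N -> Inn G0 \subset 'N(N) -> N :=: 1.
Proof.
move=> sNA solN nNI.
have nIN : N \subset 'N(Inn G0) := subset_trans sNA Aut_norm_Inn.
have nsNI : (N :&: Inn G0)%G <| Inn G0.
  by rewrite /normal subsetIr normsI // normG.
have NI1 : N :&: Inn G0 = 1.
  case/simpleP: Inn_simple => _ /(_ _ nsNI) [//|NII].
  have sIN : Inn G0 \subset N by rewrite -NII subsetIl.
  by move: Inn_nsol; rewrite (solvableS sIN solN).
have : [~: N, Inn G0] \subset N :&: Inn G0.
  by apply: commg_subI; rewrite subsetI ?subxx ?nIN ?nNI.
rewrite NI1 subG1 => /eqP/commG1P cNI.
apply/trivgP/subsetP => a Na; apply/set1P.
by apply: cent_Inn; [apply: (subsetP sNA) | apply: (subsetP cNI)].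
Qed.

End GT.

Section Count.
Variable T : finGroupType.

Definition piH (H : {set T}) k (u : {ffun 'I_k -> {set T}}) : {ffun 'I_k -> {set T}} :=
  [ffun i => H * u i].

Lemma piH_tact H k (u : {ffun 'I_k -> {set T}}) g :
  piH H (tact u g) = tact (piH H u) g.
Proof. by apply/ffunP => i; rewrite !ffunE mulgA. Qed.

Lemma tactM k (p : {ffun 'I_k -> {set T}}) g h : tact (tact p g) h = tact p (g * h).
Proof. by apply/ffunP => i; rewrite !ffunE rcosetM. Qed.

Lemma tact1 k (p : {ffun 'I_k -> {set T}}) : tact p 1 = p.
Proof. by apply/ffunP => i; rewrite !ffunE rcoset1. Qed.

Lemma torbit_tact (L : {group T}) k (p : {ffun 'I_k -> {set T}}) g :
  g \in L -> torbit L (tact p g) = torbit L p.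
Proof.
move=> Lg; apply/setP => q; apply/imsetP/imsetP => [[h Lh ->]|[h Lh ->]].
  by exists (g * h); rewrite ?groupM // tactM.
by exists (g^-1 * h); rewrite ?groupM ?groupV // tactM mulKVg.
Qed.
End Count.

Theorem mainTheorem8 (gT : finGroupType) (G0 : {group gT}) :
  simple G0 -> ~~ abelian G0 ->
  (forall H : {group {perm gT}},
      [max H of K | solvable K & K \subset Aut G0] ->
      5 <= Reg H (H <*> Inn G0) 5) ->
  forall G S : {group {perm gT}},
    Inn G0 \subset G -> G \subset Aut G0 ->
    S \subset G -> solvable S ->
    5 <= Reg S G 5.
Proof.
move=> simG nabG hyp G S sIG sGA sSG solS.
have sSA : S \subset Aut G0 := subset_trans sSG sGA.
have [H maxH sSH] := @maxgroup_exists _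
  (fun K : {group {perm gT}} => solvable K && (K \subset Aut G0)) S
  (introT andP (conj solS sSA)).
have /andP[solH sHA] := maxgroupp maxH.
apply: leq_trans (hyp H maxH) _.
set L := (H <*> Inn G0)%G.
have sHL : H \subset L := joing_subl _ _.
have sIL : Inn G0 \subset L := joing_subr _ _.
have core1 : gcore H L = 1.
  apply: (solv_norm_trivial simG nabG (N := gcore_group H L)).
  - exact: subset_trans (gcore_sub _ _) sHA.
  - exact: solvableS (gcore_sub _ _) solH.
  - exact: subset_trans sIL (gcore_norm _ _).
have coreS : gcore S G = 1.
  apply: (solv_norm_trivial simG nabG (N := gcore_group S G)).
  - exact: subset_trans (gcore_sub _ _) sSA.
  - exact: solvableS (gcore_sub _ _) solS.
  - exact: subset_trans sIG (gcore_norm _ _).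
have LE : L :=: H * Inn G0.
  exact: norm_joinEl (subset_trans sHA (Aut_norm_Inn G0)).
rewrite /Reg.
pose f (O : {set {ffun 'I_5 -> {set {perm gT}}}}) :=
  if [pick u in O | piH H u \in cosetTuples H L 5] is Some u
  then torbit L (piH H u) else set0.
apply: leq_trans (leq_imset_card f _).
apply: subset_leq_card; apply/subsetP => P /imsetP[p].
rewrite inE => /andP[pC /eqP pstab] ->.
have ex i : exists2 y, y \in Inn G0 & p i = H :* y.
  move: pC; rewrite inE => /forallP /(_ i) /imsetP[l Ll ->].
  move: Ll; rewrite LE => /mulsgP[h y Hh Iy ->].
  by exists y => //; rewrite rcosetE rcosetM rcoset_id.
pose x i := odflt 1 [pick y in Inn G0 | p i == H :* y].
have xP i : x i \in Inn G0 /\ p i = H :* x i.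
  rewrite /x; case: pickP => [y /andP[Iy /eqP E] | none] //=.
  by have [y Iy E] := ex i; have := none y; rewrite Iy E eqxx.
pose t := [ffun i => S :* x i].
have tC : t \in cosetTuples S G 5.
  rewrite inE; apply/forallP => i; rewrite ffunE -rcosetE.
  by apply: imset_f; apply: (subsetP sIG); case: (xP i).
have pit : piH H t = p.
  by apply/ffunP => i; rewrite !ffunE mulgA mulGSid // (xP i).2.
have gL g : g \in G -> piH H (tact t g) \in cosetTuples H L 5 -> g \in L.
  move=> Gg; rewrite piH_tact pit inE => /forallP /(_ ord0).
  rewrite ffunE (xP ord0).2 => /imsetP[l Ll E].
  have : x ord0 * g \in rcoset H l by rewrite -E -rcosetM rcoset_refl.
  rewrite rcosetE => /rcosetP[h Hh E'].
  have Lx : x ord0 \in L by apply: (subsetP sIL); case: (xP ord0).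
  rewrite -(mulKg (x ord0) g) E' groupM ?groupV //.
  by rewrite groupM // (subsetP sHL).
apply/imsetP; exists (torbit G t).
  apply: imset_f; rewrite inE tC /= coreS.
  rewrite eqEsubset; apply/andP; split; last first.
    by apply/subsetP => g /set1P ->; rewrite inE group1 tact1 eqxx.
  apply/subsetP => g; rewrite inE => /andP[Gg /eqP tg].
  have Lg : g \in L.
    by apply: (gL g Gg); rewrite tg pit; exact: pC.
  have : g \in tstab L p.
    by rewrite /tstab inE Lg /= -pit -piH_tact tg.
  by rewrite [tstab _ p]pstab core1.
rewrite /f; case: pickP => [u /andP[Ou Cu] | none].
  move: Ou Cu => /imsetP[g Gg ->] Cu.
  by rewrite piH_tact pit torbit_tact // gL.
have := none t; rewrite pit pC andbT.
suff -> : t \in torbit G t by [].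
by apply/imsetP; exists 1; rewrite ?tact1.
Qed.
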